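(* Let $\mathcal{C}$ be a category and $A$ an object of $\mathcal{C}$ satisfying the axioms RC0, RC1, RC2 below, and let $G=\mathrm{Aut}(A)^{op}$. Then for every object $X$ the set $[A,X]$ with the left $G$-action $g\cdot x=x\circ g$ is a transitive $G$-set, giving a functor $[A,-]_G\colon\mathcal{C}\to t\mathcal{E}ns^G$. This functor has a left adjoint $A\times_G(-)$, given on a transitive $G$-set $E$ by $A\times_G E=A/H$ where $H=\mathrm{Fix}(x_0)=\{g: g\cdot x_0=x_0\}$ for any chosen $x_0\in E$; the unit $E\cong[A,A]/H\to[A,A/H]$ and the counit $A/\mathrm{Fix}(x)\to X$ (for $x\in[A,X]$) are isomorphisms. Hence $[A,-]_G$ and $A\times_G(-)$ establish an equivalence of categories $\mathcal{C}\simeq t\mathcal{E}ns^G$.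
   Context: $t\mathcal{E}ns^G$ denotes the category of transitive (left) $G$-sets with equivariant maps. An arrow $f\colon X\to Y$ is a strict epimorphism if for every arrow $g\colon X\to Z$ compatible with $f$ (for every object $C$ and all $u,v\colon C\to X$ with $f\circ u=f\circ v$ one has $g\circ u=g\circ v$) there is a unique $k\colon Y\to Z$ with $g=k\circ f$. For a group $H$ acting on $A$ by automorphisms (a homomorphism $H\to\mathrm{Aut}(A)^{op}$), the quotient $q\colon A\to A/H$ is an arrow with $q\circ h=q$ for all $h\in H$, universal among such arrows. Axioms: RC0: for every object $X$ there exists an arrow $A\to X$, and every arrow $A\to X$ is a strict epimorphism. RC1: for every subgroup $H\subseteq\mathrm{Aut}(A)$ the quotient $q\colon A\to A/H$ exists and the map $[A,A]\to[A,A/H]$, $f\mapsto q\circ f$, is surjective with $q\circ f=q\circ g$ iff $f=h\circ g$ for some $h\in H$. RC2: $[A,A]=\mathrm{Aut}(A)$. *)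

(* Defs.v *)
Record Category := {
  Ob :> Type;
  Hom : Ob -> Ob -> Type;
  comp : forall X Y Z : Ob, Hom Y Z -> Hom X Y -> Hom X Z;
  idm : forall X : Ob, Hom X X;
  comp_assoc : forall (X Y Z W : Ob) (f : Hom X Y) (g : Hom Y Z) (h : Hom Z W),
      comp X Z W h (comp X Y Z g f) = comp X Y W (comp Y Z W h g) f;
  comp_id_l : forall (X Y : Ob) (f : Hom X Y), comp X Y Y (idm Y) f = f;
  comp_id_r : forall (X Y : Ob) (f : Hom X Y), comp X X Y f (idm X) = f
}.

Arguments Hom {C} X Y : rename.
Arguments comp {C X Y Z} g f : rename.
Arguments idm {C} X : rename.

Notation "g ∘ f" := (comp g f) (at level 40, left associativity).


Definition compatible {C : Category} {X Y Z : C} (f : Hom X Y) (g : Hom X Z) : Prop :=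
  forall (W : C) (u v : Hom W X), f ∘ u = f ∘ v -> g ∘ u = g ∘ v.

Definition strict_epi {C : Category} {X Y : C} (f : Hom X Y) : Prop :=
  forall (Z : C) (g : Hom X Z), compatible f g -> exists! k : Hom Y Z, g = k ∘ f.

Definition is_iso {C : Category} {X Y : C} (f : Hom X Y) : Prop :=
  exists g : Hom Y X, g ∘ f = idm X /\ f ∘ g = idm Y.

Definition Aut {C : Category} (A : C) : Type := { f : Hom A A | is_iso f }.

Lemma is_iso_id {C : Category} (A : C) : is_iso (idm A).
Proof. exists (idm A); split; apply comp_id_l. Qed.

Lemma is_iso_comp {C : Category} {X Y Z : C} (f : Hom X Y) (g : Hom Y Z) :
  is_iso f -> is_iso g -> is_iso (g ∘ f).
Proof.
  intros [f' [Hf1 Hf2]] [g' [Hg1 Hg2]]. exists (f' ∘ g'). split.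
  - rewrite comp_assoc, <- (comp_assoc _ _ _ _ _ g g' f'), Hg1, comp_id_r. exact Hf1.
  - rewrite comp_assoc, <- (comp_assoc _ _ _ _ _ f' f g), Hf2, comp_id_r. exact Hg2.
Qed.

Definition G_one {C : Category} (A : C) : Aut A := exist _ (idm A) (is_iso_id A).

(* multiplication of G = Aut(A)^op :  g * h := h ∘ g *)
Definition G_mul {C : Category} {A : C} (g h : Aut A) : Aut A :=
  exist _ (proj1_sig h ∘ proj1_sig g)
        (is_iso_comp _ _ (proj2_sig g) (proj2_sig h)).

Definition is_Gaction {C : Category} (A : C) {E : Type} (act : Aut A -> E -> E) : Prop :=
  (forall x, act (G_one A) x = x) /\
  (forall g h x, act (G_mul g h) x = act g (act h x)).

Definition transitive {C : Category} (A : C) {E : Type} (act : Aut A -> E -> E) : Prop :=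
  inhabited E /\ forall x y : E, exists g : Aut A, act g x = y.

Definition equivariant {C : Category} (A : C) {E E' : Type}
  (act : Aut A -> E -> E) (act' : Aut A -> E' -> E') (phi : E -> E') : Prop :=
  forall (g : Aut A) (x : E), phi (act g x) = act' g (phi x).

Definition bijective {E E' : Type} (phi : E -> E') : Prop :=
  (forall x y, phi x = phi y -> x = y) /\ (forall y, exists x, phi x = y).

Definition homact {C : Category} (A X : C) (g : Aut A) (x : Hom A X) : Hom A X :=
  x ∘ proj1_sig g.

Definition Fix {C : Category} (A : C) {E : Type} (act : Aut A -> E -> E) (x0 : E)
  : Hom A A -> Prop :=
  fun h => exists p : is_iso h, act (exist _ h p) x0 = x0.

Definition is_aut_subgroup {C : Category} (A : C) (H : Hom A A -> Prop) : Prop :=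
  (forall h, H h -> is_iso h) /\
  H (idm A) /\
  (forall h h', H h -> H h' -> H (h ∘ h')) /\
  (forall h h', H h -> h' ∘ h = idm A -> h ∘ h' = idm A -> H h').

Definition is_quotient {C : Category} (A : C) (H : Hom A A -> Prop) {Q : C}
  (q : Hom A Q) : Prop :=
  (forall h, H h -> q ∘ h = q) /\
  (forall (Z : C) (f : Hom A Z), (forall h, H h -> f ∘ h = f) ->
     exists! k : Hom Q Z, f = k ∘ q).

Definition RC0 {C : Category} (A : C) : Prop :=
  forall X : C, inhabited (Hom A X) /\ forall x : Hom A X, strict_epi x.

Definition RC1 {C : Category} (A : C) : Prop :=
  forall H : Hom A A -> Prop, is_aut_subgroup A H ->
    exists (Q : C) (q : Hom A Q),
      is_quotient A H q /\
      (forall y : Hom A Q, exists f : Hom A A, y = q ∘ f) /\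
      (forall f g : Hom A A, q ∘ f = q ∘ g <-> exists h, H h /\ f = h ∘ g).

Definition RC2 {C : Category} (A : C) : Prop :=
  forall f : Hom A A, is_iso f.

(* Main.v *)
Require Import Defs.
From Stdlib Require Import ProofIrrelevance ClassicalEpsilon.
From Stdlib Require Import ProofIrrelevance ClassicalEpsilon.

Lemma epi_of_strict {C : Category} {X Y : C} (x : Hom X Y) :
  strict_epi x -> forall (Z : C) (k1 k2 : Hom Y Z), k1 ∘ x = k2 ∘ x -> k1 = k2.
Proof.
  intros Hs Z k1 k2 E.
  destruct (Hs Z (k1 ∘ x)) as [k [_ Hu]].
  - intros W u v Huv. rewrite <- !comp_assoc, Huv. reflexivity.
  - transitivity k; [symmetry|]; apply Hu; auto.
Qed.

Lemma compat_A {C : Category} (A : C) : RC0 A ->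
  forall (X Y : C) (x : Hom A X) (y : Hom A Y),
  (forall a b : Hom A A, x ∘ a = x ∘ b -> y ∘ a = y ∘ b) -> compatible x y.
Proof.
  intros H0 X Y x y H W u v Huv.
  destruct (H0 W) as [[w] Hw].
  apply (epi_of_strict w (Hw w)).
  rewrite <- !comp_assoc. apply H. rewrite !comp_assoc, Huv. reflexivity.
Qed.

Lemma aut_eq {C : Category} {A : C} (g g' : Aut A) :
  proj1_sig g = proj1_sig g' -> g = g'.
Proof.
  destruct g as [g p], g' as [g' p']; simpl; intro E; subst.
  f_equal; apply proof_irrelevance.
Qed.

Definition mk {C : Category} {A : C} (H2 : RC2 A) (f : Hom A A) : Aut A :=
  exist _ f (H2 f).

Lemma fix_sub {C : Category} (A : C) {E : Type} (act : Aut A -> E -> E) (x0 : E) :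
  is_Gaction A act -> is_aut_subgroup A (Fix A act x0).
Proof.
  intros [Ha1 Ha2]. repeat split.
  - intros h [p _]; exact p.
  - exists (is_iso_id A). rewrite <- (Ha1 x0) at 2. reflexivity.
  - intros h h' [p Hp] [p' Hp'].
    exists (is_iso_comp _ _ p' p).
    transitivity (act (G_mul (exist _ h' p') (exist _ h p)) x0).
    + reflexivity.
    + rewrite Ha2, Hp, Hp'. reflexivity.
  - intros h h' [p Hp] E1 E2.
    assert (p' : is_iso h') by (exists h; split; assumption).
    exists p'.
    rewrite <- Hp at 1.
    rewrite <- Ha2.
    transitivity (act (G_one A) x0); [|apply Ha1].
    f_equal. apply aut_eq. simpl. exact E2.
Qed.

Lemma fix_of {C : Category} (A : C) {E : Type} (act : Aut A -> E -> E) (x0 : E) :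
  is_Gaction A act -> forall g g' : Aut A, act g x0 = act g' x0 ->
  exists h, Fix A act x0 h /\ proj1_sig g = h ∘ proj1_sig g'.
Proof.
  intros [Ha1 Ha2] [g p] [g' p'] Eq. simpl.
  pose proof p' as [gi [Hi1 Hi2]].
  assert (pi : is_iso gi) by (exists g'; split; assumption).
  exists (g ∘ gi). split.
  - exists (is_iso_comp _ _ pi p).
    transitivity (act (exist _ gi pi) (act (exist _ g p) x0)).
    + rewrite <- Ha2. reflexivity.
    + transitivity (act (exist _ gi pi) (act (exist _ g' p') x0)); [f_equal; exact Eq|].
      rewrite <- Ha2. rewrite <- (Ha1 x0) at 2. f_equal. apply aut_eq. simpl. exact Hi2.
  - rewrite <- comp_assoc, Hi1, comp_id_r. reflexivity.
Qed.

Lemma act_fix {C : Category} (A : C) {E : Type} (act : Aut A -> E -> E) (x0 : E) :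
  is_Gaction A act -> forall h (g g' : Aut A), Fix A act x0 h ->
  proj1_sig g = h ∘ proj1_sig g' -> act g x0 = act g' x0.
Proof.
  intros [Ha1 Ha2] h g g' [p Hp] Eq.
  transitivity (act (G_mul g' (exist _ h p)) x0).
  - f_equal. apply aut_eq. simpl. exact Eq.
  - rewrite Ha2, Hp. reflexivity.
Qed.

Lemma homact_G {C : Category} (A X : C) : is_Gaction A (homact A X).
Proof.
  split.
  - intro x. unfold homact. simpl. apply comp_id_r.
  - intros g h x. unfold homact. simpl. apply comp_assoc.
Qed.

Lemma counit {C : Category} (A : C) : RC0 A -> RC2 A ->
  forall (X : C) (x : Hom A X) (Q : C) (q : Hom A Q),
  is_quotient A (Fix A (homact A X) x) q ->
  exists k l, k ∘ q = x /\ l ∘ x = q /\ k ∘ l = idm X /\ l ∘ k = idm Q.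
Proof.
  intros H0 H2 X x Q q [Hq1 Hq2].
  destruct (Hq2 X x) as [k [Hk _]].
  { intros h [p Hp]. exact Hp. }
  destruct (proj2 (H0 X) x Q q) as [l [Hl _]].
  { apply compat_A; auto. intros a b Hab.
    destruct (fix_of A (homact A X) x (homact_G A X) (mk H2 a) (mk H2 b) Hab)
      as [h [Fh Eh]]. simpl in Eh. subst a.
    rewrite comp_assoc, (Hq1 h Fh). reflexivity. }
  exists k, l. split; [auto|split; [auto|split]].
  - apply (epi_of_strict x (proj2 (H0 X) x)).
    rewrite <- comp_assoc, <- Hl, <- Hk, comp_id_l. reflexivity.
  - apply (epi_of_strict q (proj2 (H0 Q) q)).
    rewrite <- comp_assoc, <- Hk, <- Hl, comp_id_l. reflexivity.
Qed.

Lemma homact_trans {C : Category} (A : C) : RC0 A -> RC1 A -> RC2 A ->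
  forall X, transitive A (homact A X).
Proof.
  intros H0 H1 H2 X. split; [apply (H0 X)|].
  intros x y.
  destruct (H1 _ (fix_sub A (homact A X) x (homact_G A X))) as [Q [q [Hq [Hs _]]]].
  destruct (counit A H0 H2 X x Q q Hq) as [k [l [Ek [El [Ekl Elk]]]]].
  destruct (Hs (l ∘ y)) as [f Hf].
  exists (mk H2 f). unfold homact; simpl.
  rewrite <- Ek, <- comp_assoc, <- Hf, comp_assoc, Ekl, comp_id_l. reflexivity.
Qed.

Lemma unit_part {C : Category} (A : C) : RC0 A -> RC1 A -> RC2 A ->
  forall (E : Type) (act : Aut A -> E -> E),
      is_Gaction A act -> transitive A act ->
      forall x0 : E,
        forall (Q : C) (q : Hom A Q), is_quotient A (Fix A act x0) q ->
          exists u : E -> Hom A Q,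
            u x0 = q /\ equivariant A act (homact A Q) u /\ bijective u /\
            (forall (X : C) (phi : E -> Hom A X),
                equivariant A act (homact A X) phi ->
                exists! k : Hom Q X, forall e : E, phi e = k ∘ u e).
Proof.
  intros H0 H1 H2 E act Hg Ht x0 Q q [Hq1 Hq2].
  pose (gsel := fun e => proj1_sig (constructive_indefinite_description _ (proj2 Ht x0 e))).
  assert (spec : forall e, act (gsel e) x0 = e).
  { intro e. unfold gsel. exact (proj2_sig (constructive_indefinite_description _ (proj2 Ht x0 e))). }
  assert (wd : forall g g', act g x0 = act g' x0 -> q ∘ proj1_sig g = q ∘ proj1_sig g').
  { intros g g' Hgg. destruct (fix_of A act x0 Hg g g' Hgg) as [h [Fh Eh]].
    rewrite Eh, comp_assoc, (Hq1 h Fh). reflexivity. }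
  exists (fun e => q ∘ proj1_sig (gsel e)).
  split; [|split; [|split; [split|]]].
  - rewrite (wd (gsel x0) (G_one A)). apply comp_id_r.
    rewrite spec. symmetry. apply (proj1 Hg).
  - intros g e. unfold homact.
    rewrite (wd (gsel (act g e)) (G_mul g (gsel e))).
    + simpl. apply comp_assoc.
    + rewrite spec, (proj2 Hg), spec. reflexivity.
  - intros e e' Hee.
    destruct (H1 _ (fix_sub A act x0 Hg)) as [Q' [q' [[Hq'1 _] [_ Hq'3]]]].
    destruct (Hq2 Q' q' Hq'1) as [k' [Hk' _]].
    assert (Hq' : q' ∘ proj1_sig (gsel e) = q' ∘ proj1_sig (gsel e')).
    { rewrite Hk', <- !comp_assoc, Hee. reflexivity. }
    destruct (proj1 (Hq'3 _ _) Hq') as [h [Fh Eh]].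
    rewrite <- (spec e), <- (spec e'). exact (act_fix A act x0 Hg h _ _ Fh Eh).
  - intro y. destruct (proj2 (homact_trans A H0 H1 H2 Q) q y) as [g Hgy].
    exists (act g x0). unfold homact in Hgy. rewrite <- Hgy. apply wd. apply spec.
  - intros X phi Hphi.
    destruct (Hq2 X (phi x0)) as [k [Hk Hku]].
    { intros h [p Hp]. change (homact A X (exist _ h p) (phi x0) = phi x0).
      rewrite <- Hphi, Hp. reflexivity. }
    exists k. split.
    + intro e. rewrite <- (spec e) at 1. rewrite Hphi. unfold homact.
      rewrite Hk. symmetry. apply comp_assoc.
    + intros k' Hk'. apply Hku. rewrite (Hk' x0).
      rewrite (wd (gsel x0) (G_one A)). simpl. rewrite comp_id_r. reflexivity.
      rewrite spec. symmetry. apply (proj1 Hg).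
Qed.
Theorem theorem2p11 (C : Category) (A : C) :
  RC0 A -> RC1 A -> RC2 A ->
  (* [A,X] with g.x = x ∘ g is a transitive G-set *)
  (forall X : C, is_Gaction A (homact A X) /\ transitive A (homact A X)) /\
  (* [A,-]_G acts on arrows by postcomposition, giving equivariant maps *)
  (forall (X Y : C) (f : Hom X Y),
      equivariant A (homact A X) (homact A Y) (fun x => f ∘ x)) /\
  (* unit: for transitive E, x0 in E, H = Fix(x0), and A/H a quotient,
     E ≅ [A,A/H] via g.x0 |-> q ∘ g, and this is universal (left adjoint) *)
  (forall (E : Type) (act : Aut A -> E -> E),
      is_Gaction A act -> transitive A act ->
      forall x0 : E,
        is_aut_subgroup A (Fix A act x0) /\
        forall (Q : C) (q : Hom A Q), is_quotient A (Fix A act x0) q ->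
          exists u : E -> Hom A Q,
            u x0 = q /\ equivariant A act (homact A Q) u /\ bijective u /\
            (forall (X : C) (phi : E -> Hom A X),
                equivariant A act (homact A X) phi ->
                exists! k : Hom Q X, forall e : E, phi e = k ∘ u e)) /\
  (* counit: A/Fix(x) -> X is an isomorphism *)
  (forall (X : C) (x : Hom A X),
      is_aut_subgroup A (Fix A (homact A X) x) /\
      forall (Q : C) (q : Hom A Q), is_quotient A (Fix A (homact A X) x) q ->
        exists k : Hom Q X, k ∘ q = x /\ is_iso k) /\
  (* equivalence C ≃ tEns^G: [A,-]_G fully faithful ... *)
  (forall X Y : C,
      (forall f f' : Hom X Y, (forall x : Hom A X, f ∘ x = f' ∘ x) -> f = f') /\
      (forall phi : Hom A X -> Hom A Y,
          equivariant A (homact A X) (homact A Y) phi ->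
          exists f : Hom X Y, forall x, phi x = f ∘ x)) /\
  (* ... and essentially surjective *)
  (forall (E : Type) (act : Aut A -> E -> E),
      is_Gaction A act -> transitive A act ->
      exists (X : C) (u : E -> Hom A X),
        equivariant A act (homact A X) u /\ bijective u).
Proof.
  intros H0 H1 H2. split; [|split; [|split; [|split; [|split]]]].
  - intro X. split; [apply homact_G | apply homact_trans; auto].
  - intros X Y f g x. unfold homact. apply comp_assoc.
  - intros E act Hg Ht x0. split; [apply fix_sub; auto | apply unit_part; auto].
  - intros X x. split; [apply fix_sub, homact_G|].
    intros Q q Hq. destruct (counit A H0 H2 X x Q q Hq) as [k [l [Ek [El [Ekl Elk]]]]].
    exists k. split; auto. exists l; split; auto.
  - intros X Y. split.
    + intros f f' Hff. destruct (H0 X) as [[x] Hx]. apply (epi_of_strict x (Hx x)). apply Hff.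
    + intros phi Hphi. destruct (H0 X) as [[x0] Hx].
      destruct (Hx x0 Y (phi x0)) as [f [Hf _]].
      { apply compat_A; auto. intros a b Hab.
        change (homact A Y (mk H2 a) (phi x0) = homact A Y (mk H2 b) (phi x0)).
        rewrite <- !Hphi. unfold homact; simpl. rewrite Hab. reflexivity. }
      exists f. intro x. destruct (proj2 (homact_trans A H0 H1 H2 X) x0 x) as [g Hg].
      rewrite <- Hg, Hphi. unfold homact. rewrite Hf. symmetry; apply comp_assoc.
  - intros E act Hg Ht. destruct (proj1 Ht) as [x0].
    destruct (H1 _ (fix_sub A act x0 Hg)) as [Q [q [Hq _]]].
    destruct (unit_part A H0 H1 H2 E act Hg Ht x0 Q q Hq) as [u [_ [Hu [Hb _]]]].
    exists Q, u. auto.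
Qed.
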